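(* Let $M$ be a subset of the positive integers and $n\ge1$. Then for every $r\in\mathbb R$, $$E_n\Big(\exp\Big\{r\sum_{k\in M}p_{kn}\delta_{k0}(n)\Big\}\Big)\le\prod_{k\in M}\Big(\big(e^{rp_{kn}}-1\big)(1-p_{kn})^n+1\Big),$$ and for every $j\ge1$, $$E_n\Big(\exp\Big\{r\sum_{k\in M}\big(\delta_{k0}(n)+\delta_{k1}(n)+\cdots+\delta_{kj}(n)\big)\Big\}\Big)\le\prod_{k\in M}\Big(\big(e^r-1\big)\sum_{l=0}^j\frac{n!}{(n-l)!\,l!}p_{kn}^l(1-p_{kn})^{n-l}+1\Big).$$
   Context: $p_n=(p_{kn})_{k\ge1}$ is a probability vector; under the probability $P_n$ (expectation $E_n$) a sample of size $n$ is drawn i.i.d. from countably many species, species $k$ being drawn with probability $p_{kn}$; $X_k(n)$ is the number of times species $k$ appears in the sample, and $\delta_{kj}(n)=I_{\{X_k(n)=j\}}$. *)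

(* Defs.v *)
From HB Require Import structures.
From mathcomp Require Import all_boot all_order all_algebra.
From mathcomp Require Import all_classical all_reals all_analysis.
Set Implicit Arguments. Unset Strict Implicit. Unset Printing Implicit Defensive.
Import Order.TTheory GRing.Theory Num.Theory.
Local Open Scope classical_set_scope.
Local Open Scope ring_scope.

(* Species are labelled by k : nat (species k of the paper = label k-1 here).  A sample of size n is a finite function s : 'I_n -> nat,
   s i being the species of the i-th draw. *)

Definition Xcount (n : nat) (s : {ffun 'I_n -> nat}) (k : nat) : nat :=
  #|[set i : 'I_n | s i == k]|.

Definition delta {R : realType} (n : nat) (s : {ffun 'I_n -> nat}) (k j : nat) : R :=
  (Xcount s k == j)%:R.

Definition sample_prob {R : realType} (p : nat -> R) (n : nat)
  (s : {ffun 'I_n -> nat}) : R := \prod_(i < n) p (s i).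

Definition En {R : realType} (p : nat -> R) (n : nat)
  (F : {ffun 'I_n -> nat} -> \bar R) : \bar R :=
  (\esum_(s in [set: {ffun 'I_n -> nat}]) (sample_prob p s)%:E * F s)%E.

Definition prod_over {R : realType} (M : set nat) (a : nat -> R) : \bar R :=
  limn (fun N => (\prod_(k < N | (k : nat) \in M) a k)%:E).

(* Main.v *)
Require Import Defs.
From HB Require Import structures.
From mathcomp Require Import all_boot all_order all_algebra.
From mathcomp Require Import all_classical all_reals all_analysis.
From mathcomp Require Import ring lra.
Import Order.TTheory GRing.Theory Num.Theory.
Local Open Scope classical_set_scope.
Local Open Scope ring_scope.
Section MM.
Context {R : realType}.

Fixpoint mm (q : R) (n : nat) (g : nat -> R) : R :=
  match n with
  | 0 => g 0%N
  | n'.+1 => q * mm q n' (fun x => g x.+1) + (1 - q) * mm q n' g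
  end.

Lemma mm_lin q n (a b : R) g h :
  mm q n (fun x => a * g x + b * h x) = a * mm q n g + b * mm q n h.
Proof.
elim: n g h => [|n IH] g h //=.
rewrite (IH (fun x => g x.+1) (fun x => h x.+1)) IH; ring.
Qed.

Lemma mm_cst q n (c : R) : mm q n (fun _ => c) = c.
Proof. elim: n c => [|n IH] c //=; rewrite !IH; ring. Qed.

Lemma mm_ge0 q n g : 0 <= q <= 1 -> (forall x, 0 <= g x) -> 0 <= mm q n g.
Proof.
move=> /andP[q0 q1]; elim: n g => [|n IH] g g0 //=.
apply: addr_ge0; apply: mulr_ge0 => //; last (by apply: IH); last by lra.
by apply: IH.
Qed.

Lemma mm_ext q n g h : (forall x, g x = h x) -> mm q n g = mm q n h.
Proof. by move=> e; congr mm; apply: boolp.funext. Qed.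

Lemma mm_affine q n (a b : R) g : mm q n (fun x => a + b * g x) = a + b * mm q n g.
Proof.
rewrite -{2}(mm_cst q n a) -[in RHS](mul1r (mm q n _)) -mm_lin.
by apply: mm_ext => x; ring.
Qed.

End MM.
Section ALG.
Variable R : realType.
Variables (p A A' : nat -> R).
Hypothesis p0 : forall k, 0 <= p k.
Hypothesis A0 : forall k, 0 <= A k.
Hypothesis AS0 : forall k, 0 <= p k * A' k + (1 - p k) * A k.
Hypothesis dd : forall k l, 0 <= (A' k - A k) * (A' l - A l).

Let B x k := if k == x then A' k else A k.
Let T (S : seq nat) := \sum_(x <- S) p x * \prod_(k <- S) B x k.
Let Pr (S : seq nat) := \prod_(k <- S) A k.
Let D (S : seq nat) := T S - (\sum_(x <- S) p x) * Pr S.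

Lemma Pr_ge0 S : 0 <= Pr S.
Proof. by rewrite /Pr; elim: S => [|a S IH]; rewrite ?big_nil ?big_cons ?mulr_ge0. Qed.

Lemma D_cons a S : a \notin S ->
  D (a :: S) = p a * (A' a - A a) * Pr S + A a * D S.
Proof.
move=> aS; rewrite /D /T /Pr !big_cons /B eqxx.
have -> : \prod_(k <- S) (if k == a then A' k else A k) = \prod_(k <- S) A k.
  rewrite big_seq_cond [RHS]big_seq_cond; apply: eq_bigr => k /andP[kS _].
  by case: eqP => // ka; move: aS; rewrite -ka kS.
have -> : \sum_(j <- S) p j * \prod_(k <- a :: S) (if k == j then A' k else A k) =
   A a * \sum_(x <- S) p x * \prod_(k <- S) (if k == x then A' k else A k).
  rewrite mulr_sumr big_seq_cond [RHS]big_seq_cond; apply: eq_bigr => x /andP[xS _].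
  rewrite big_cons.
  have -> : (a == x) = false by apply/eqP => ax; move: aS; rewrite ax xS.
  ring.
ring.
Qed.

Lemma D_sign S a : uniq S -> 0 <= (A' a - A a) * D S.
Proof.
elim: S => [|b S IH] /=; first by rewrite /D /T /Pr !big_nil; lra.
move=> /andP[bS uS]; rewrite D_cons //.
have -> : (A' a - A a) * (p b * (A' b - A b) * Pr S + A b * D S) =
  p b * Pr S * ((A' a - A a) * (A' b - A b)) + A b * ((A' a - A a) * D S) by ring.
apply: addr_ge0; apply: mulr_ge0.
- by rewrite mulr_ge0 ?Pr_ge0.
- exact: dd.
- exact: A0.
- exact: IH.
Qed.

Lemma alg_main S : uniq S ->
  T S + (1 - \sum_(x <- S) p x) * Pr S <= \prod_(k <- S) (p k * A' k + (1 - p k) * A k).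
Proof.
move=> uS; suff : Pr S + D S <= \prod_(k <- S) (p k * A' k + (1 - p k) * A k).
  move=> h; have -> : T S + (1 - \sum_(x <- S) p x) * Pr S = Pr S + D S by rewrite /D; ring.
  exact: h.
elim: S uS => [|a S IH] /=; first by rewrite /D /T /Pr !big_nil; lra.
move=> /andP[aS uS]; rewrite D_cons // big_cons.
have h1 := IH uS.
have h2 := @D_sign S a uS.
have h3 := AS0 a.
have h4 : Pr (a :: S) = A a * Pr S by rewrite /Pr big_cons.
rewrite h4.
set Q := \prod_(k <- S) _ in h1 *.
have h5 : (p a * A' a + (1 - p a) * A a) * (Pr S + D S) <= (p a * A' a + (1 - p a) * A a) * Q.
  by apply: ler_wpM2l.
have h6 : 0 <= p a * ((A' a - A a) * D S) by rewrite mulr_ge0.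
apply: le_trans h5.
have -> : A a * Pr S + (p a * (A' a - A a) * Pr S + A a * D S) =
  (p a * A' a + (1 - p a) * A a) * (Pr S + D S) - p a * ((A' a - A a) * D S) by ring.
lra.
Qed.
End ALG.
Section PROB.
Variable R : realType.
Local Open Scope ereal_scope.

Lemma esumZ (T : choiceType) (I : set T) (c : R) (a : T -> \bar R) :
  (0 <= c)%R -> (forall i, 0 <= a i) ->
  \esum_(i in I) (c%:E * a i) = c%:E * \esum_(i in I) a i.
Proof.
move=> c0 a0; rewrite /esum -ereal_supZl //; last first.
  by apply/set0P; exists 0; exists set0; [exact: fsets_set0|rewrite fsbig_set0].
congr ereal_sup; apply/seteqP; split => x /=.
  by move=> [X XI <-]; exists (\sum_(i \in X) a i); [exists X|rewrite ge0_mule_fsumr].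
by move=> [y [X XI <-] <-]; exists X => //; rewrite ge0_mule_fsumr.
Qed.

Definition fcons n (x : nat) (t : {ffun 'I_n -> nat}) : {ffun 'I_n.+1 -> nat} :=
  [ffun i => if unlift ord0 i is Some j then t j else x].

Arguments fcons {n}.

Definition ftail n (s : {ffun 'I_n.+1 -> nat}) : {ffun 'I_n -> nat} :=
  [ffun j => s (lift ord0 j)].

Arguments ftail {n}.

Lemma fcons0 n x (t : {ffun 'I_n -> nat}) : fcons x t ord0 = x.
Proof. by rewrite ffunE unlift_none. Qed.

Lemma fconsS n x (t : {ffun 'I_n -> nat}) j : fcons x t (lift ord0 j) = t j.
Proof. by rewrite ffunE liftK. Qed.

Lemma fcons_tail n (s : {ffun 'I_n.+1 -> nat}) : fcons (s ord0) (ftail s) = s.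
Proof.
apply/ffunP => i; rewrite ffunE; case: unliftP => [j ->|->] //.
by rewrite ffunE.
Qed.

Lemma card_sum n (P : pred 'I_n) : #|[set i | P i]| = (\sum_(i < n) P i)%N.
Proof.
rewrite -sum1_card big_mkcond /=; apply: eq_bigr => i _.
case: ifPn => [/set_mem /= -> //|/negP h].
by case: (boolP (P i)) => // Pi; exfalso; apply: h; exact: mem_set.
Qed.

Lemma Xcount_fcons n x (t : {ffun 'I_n -> nat}) k :
  Xcount (fcons x t) k = ((x == k) + Xcount t k)%N.
Proof.
rewrite /Xcount !card_sum big_ord_recl fcons0; congr addn.
by apply: eq_bigr => i _; rewrite fconsS.
Qed.

Lemma sample_prob_fcons (p : nat -> R) n x (t : {ffun 'I_n -> nat}) :
  sample_prob p (fcons x t) = (p x * sample_prob p t)%R.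
Proof.
rewrite /sample_prob big_ord_recl fcons0; congr (_ * _)%R.
by apply: eq_bigr => i _; rewrite fconsS.
Qed.

Lemma sample_prob_ge0 (p : nat -> R) n (s : {ffun 'I_n -> nat}) :
  (forall k, 0 <= p k)%R -> (0 <= sample_prob p s)%R.
Proof. by move=> p0; rewrite /sample_prob; apply: prodr_ge0 => i _. Qed.

Lemma En_S (p : nat -> R) n (F : {ffun 'I_n.+1 -> nat} -> \bar R) :
  (forall k, 0 <= p k)%R -> (forall s, 0 <= F s) ->
  En p F = \esum_(x in [set: nat]) (p x)%:E * En p (fun t => F (fcons x t)).
Proof.
move=> p0 F0; rewrite /En.
transitivity (\esum_(x in [set: nat]) \esum_(t in (fun _ => [set: {ffun 'I_n -> nat}]) x)
   ((sample_prob p (fcons x t))%:E * F (fcons x t))); last first.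
  apply: eq_esum => x _; rewrite -esumZ //; last first.
    by move=> t; rewrite mule_ge0 // lee_fin sample_prob_ge0.
  by apply: eq_esum => t _; rewrite sample_prob_fcons EFinM muleA.
rewrite esum_esum; last by move=> x t _ _; rewrite mule_ge0 // lee_fin sample_prob_ge0.
have -> : [set: nat] `*`` (fun _ => [set: {ffun 'I_n -> nat}]) = [set: nat * {ffun 'I_n -> nat}].
  by apply/seteqP; split.
apply: (reindex_esum [set: nat * {ffun 'I_n -> nat}] [set: {ffun 'I_n.+1 -> nat}]
   (fun k => fcons k.1 k.2)).
split.
- by move=> k.
- move=> [x t] [y u] _ _ /= e.
  have ex : x = y by have := congr1 (fun s : {ffun 'I_n.+1 -> nat} => s ord0) e; rewrite /= !fcons0.
  congr pair => //; apply/ffunP => j.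
  by have := congr1 (fun s : {ffun 'I_n.+1 -> nat} => s (lift ord0 j)) e; rewrite /= !fconsS.
- move=> s _; exists (s ord0, ftail s) => //=.
  exact: fcons_tail.
Qed.

Lemma En_0 (p : nat -> R) (F : {ffun 'I_0 -> nat} -> \bar R) (s0 : {ffun 'I_0 -> nat}) :
  0 <= F s0 -> En p F = F s0.
Proof.
move=> F0; rewrite /En.
have -> : [set: {ffun 'I_0 -> nat}] = [set s0].
  apply/seteqP; split => s //= _; apply/ffunP => -[] //.
rewrite esum_set1; last by rewrite /sample_prob big_ord0 mul1e.
by rewrite /sample_prob big_ord0 mul1e.
Qed.

End PROB.
Arguments fcons {n}.
Arguments ftail {n}.
Section CORE.
Variable R : realType.
Variable p : nat -> R.
Hypothesis p0 : forall k, 0 <= p k.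
Hypothesis p1 : (\esum_(k in [set: nat]) (p k)%:E)%E = 1%E.

Lemma esum_seq_split (H : nat -> \bar R) (S : seq nat) : uniq S ->
  (forall x, 0 <= H x)%E ->
  (\esum_(x in [set: nat]) H x = \sum_(x <- S) H x + \esum_(x in ~` [set` S]) H x)%E.
Proof.
move=> uS H0; rewrite (esumID [set` S]) //; rewrite !setTI; congr (_ + _)%E.
rewrite esum_fset //; last exact: finite_seq.
by rewrite -fsbig_seq.
Qed.

Lemma p_le1 k : p k <= 1.
Proof.
rewrite -lee_fin -p1; apply: esum_ge; exists [set k]; last by rewrite fsbig_set1.
by split => //; exact: finite_set1.
Qed.

Lemma esum_split (G : nat -> R) (S : seq nat) (c : R) : uniq S ->
  (forall x, 0 <= G x) -> 0 <= c -> (forall x, x \notin S -> G x = c) ->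
  (\esum_(x in [set: nat]) ((p x)%:E * (G x)%:E) =
   (\sum_(x <- S) p x * G x + (1 - \sum_(x <- S) p x) * c)%:E)%E.
Proof.
move=> uS G0 c0 Gc.
have hp := esum_seq_split (fun x => (p x)%:E) S uS (fun x => p0 x).
rewrite p1 sumEFin in hp.
set X := (\esum_(x in ~` [set` S]) (p x)%:E)%E in hp.
have hX : X = (1 - \sum_(x <- S) p x)%:E.
  move: hp; case: X => [r| |] //=.
  - by move=> /eqP; rewrite eqe => /eqP ->; congr EFin; ring.
rewrite (@esum_seq_split _ S uS); last by move=> x; rewrite -EFinM lee_fin mulr_ge0.
rewrite (_ : \esum_(x in ~` [set` S]) _ = (c%:E * X)%E); last first.
  rewrite /X -esumZ //; try (by move=> i; rewrite lee_fin).
  apply: eq_esum => x /= xS; rewrite Gc; first exact: muleC.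
  by apply/negP => /= xS'; apply: xS.
rewrite hX -!EFinM sumEFin -EFinD; congr EFin; ring.
Qed.

End CORE.
Section CORE2.
Variable R : realType.
Variable p : nat -> R.
Hypothesis p0 : forall k, 0 <= p k.
Hypothesis p1 : (\esum_(k in [set: nat]) (p k)%:E)%E = 1%E.

Let p01 k : 0 <= p k <= 1.
Proof. by rewrite p0 (@p_le1 R p p1). Qed.

Lemma core (sg : R) : sg * sg = 1 -> forall n (f : nat -> nat -> R) (S : seq nat), uniq S ->
  (forall k x, 0 <= f k x) -> (forall k x, 0 <= sg * (f k x.+1 - f k x)) ->
  (En p (fun s : {ffun 'I_n -> nat} => (\prod_(k <- S) f k (Xcount s k))%:E)
    <= (\prod_(k <- S) mm (p k) n (f k))%:E)%E.
Proof.
move=> ss; elim => [|n IH] f S uS f0 fm.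
  rewrite (@En_0 _ p _ [ffun i => 0%N]); last by rewrite lee_fin prodr_ge0.
  rewrite lee_fin le_eqVlt; apply/orP; left; apply/eqP.
  by apply: eq_bigr => k _; rewrite /Xcount card_sum big_ord0.
rewrite En_S //; last by move=> s; rewrite lee_fin prodr_ge0.
pose fx x k y := f k ((x == k) + y)%N.
apply: (@le_trans _ _ (\esum_(x in [set: nat]) ((p x)%:E *
     (\prod_(k <- S) mm (p k) n (fx x k))%:E))%E).
  apply: le_esum => x _; apply: lee_wpmul2l; first by rewrite lee_fin.
  have -> : (fun t : {ffun 'I_n -> nat} =>
      (\prod_(k <- S) f k (Xcount (fcons x t) k))%:E) =
      (fun t => (\prod_(k <- S) fx x k (Xcount t k))%:E).
    by apply: boolp.funext => t; congr EFin; apply: eq_bigr => k _; rewrite Xcount_fcons.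
  apply: IH => //; first by move=> k y; exact: f0.
  by move=> k y; rewrite /fx addnS; exact: fm.
pose A k := mm (p k) n (f k).
pose A' k := mm (p k) n (fun y => f k y.+1).
have A0 k : 0 <= A k by apply: mm_ge0.
have AS0 k : 0 <= p k * A' k + (1 - p k) * A k.
  by have := @mm_ge0 _ (p k) n.+1 (f k) (p01 k) (f0 k).
have sgA k : 0 <= sg * (A' k - A k).
  rewrite /A /A' -[sg * _]mul1r -(mm_cst (p k) n 1) mulrBr.
  have -> : mm (p k) n (fun _ => 1) * (sg * mm (p k) n (fun y => f k y.+1) -
      sg * mm (p k) n (f k)) = sg * mm (p k) n (fun y => f k y.+1) + (- sg) * mm (p k) n (f k).
    by rewrite mm_cst; ring.
  rewrite -mm_lin; apply: mm_ge0 => // y.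
  by have := fm k y; rewrite mulrBr; lra.
have dd k l : 0 <= (A' k - A k) * (A' l - A l).
  have -> : (A' k - A k) * (A' l - A l) = (sg * (A' k - A k)) * (sg * (A' l - A l)).
    by rewrite mulrACA ss mul1r.
  exact: mulr_ge0.
have H := @alg_main R p A A' p0 A0 AS0 dd S uS; simpl in H.
rewrite (@esum_split R p p0 p1 (fun x => \prod_(k <- S) mm (p k) n (fx x k)) S
   (\prod_(k <- S) A k)) //.
- rewrite lee_fin; apply: le_trans H; rewrite le_eqVlt; apply/orP; left; apply/eqP.
  congr (_ + _); apply: eq_bigr => x _; congr (_ * _); apply: eq_bigr => k _.
  rewrite /fx eq_sym; case: eqP => _ /=.
    by apply: mm_ext => y; rewrite add1n.
  by apply: mm_ext => y; rewrite add0n.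
- by move=> x; apply: prodr_ge0 => k _; apply: mm_ge0 => // y; exact: f0.
- by apply: prodr_ge0 => k _.
- move=> x xS; rewrite big_seq_cond [RHS]big_seq_cond; apply: eq_bigr => k /andP[kS _].
  have xk : (x == k) = false by apply/eqP => xk; move: xS; rewrite xk kS.
  by apply: mm_ext => y; rewrite /fx xk add0n.
Qed.

End CORE2.
Import numFieldNormedType.Exports.
Section LIM.
Variable R : realType.

Lemma cvg_expR_E (y : nat -> R) (x : \bar R) : x != -oo%E ->
  (y N)%:E @[N --> \oo] --> x ->
  (expR (y N))%:E @[N --> \oo] --> expeR x.
Proof.
case: x => [x| |] // _.
- move=> /fine_cvgP [_ hy].
  have hy' : y n @[n --> \oo] --> x := hy.
  apply/fine_cvgP; split; first by apply: nearW.
  by apply: continuous_cvg hy'; exact: continuous_expR.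
- move=> /cvgeyPge hy; apply/cvgeyPge => A.
  apply: filterS (hy A) => N /=; rewrite !lee_fin => hN.
  by have := expR_ge1Dx (y N); lra.
Qed.

End LIM.
Section FINAL.
Variable R : realType.
Variable p : nat -> R.
Hypothesis p0 : forall k, 0 <= p k.
Hypothesis p1 : (\esum_(k in [set: nat]) (p k)%:E)%E = 1%E.
Variables (M : set nat) (n : nat) (r : R) (w : nat -> R) (b : nat -> nat -> bool).
Hypothesis w0 : forall k, 0 <= w k.
Hypothesis bm : forall k x, b k x.+1 -> b k x.

Let c k x := w k * (b k x)%:R.
Let f k x := expR (r * c k x).
Let a k := mm (p k) n (f k).
Let SN N := [seq k <- iota 0 N | k \in M].
Let u N := (\prod_(k < N | (k : nat) \in M) a k)%:E.
Let h (s : {ffun 'I_n -> nat}) := expeR (r%:E * \esum_(k in M) (c k (Xcount s k))%:E)%E.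
Let hN N (s : {ffun 'I_n -> nat}) := (expR (r * \sum_(k <- SN N) c k (Xcount s k)))%:E.

Let p01 k : 0 <= p k <= 1.
Proof. by rewrite p0 (@p_le1 R p p1). Qed.

Let SN_uniq N : uniq (SN N).
Proof. by rewrite filter_uniq // iota_uniq. Qed.

Let prod_SN (F : nat -> R) N : \prod_(k <- SN N) F k = \prod_(k < N | (k : nat) \in M) F k.
Proof. by rewrite big_filter -(big_mkord (fun k => k \in M)) /index_iota subn0. Qed.

Let sum_SN (F : nat -> R) N :
  (\sum_(0 <= k < N | k \in M) (F k)%:E)%E = (\sum_(k <- SN N) F k)%:E.
Proof. by rewrite sumEFin big_filter /index_iota subn0. Qed.

Let c0 k x : 0 <= c k x.
Proof. by rewrite /c mulr_ge0. Qed.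

Let f0 k x : 0 <= f k x.
Proof. exact: expR_ge0. Qed.

Let sg := if 0 <= r then -1 else 1 : R.

Let sgsg : sg * sg = 1.
Proof. by rewrite /sg; case: ifP => _; ring. Qed.

Let fm k x : 0 <= sg * (f k x.+1 - f k x).
Proof.
rewrite /f /c; case: (boolP (b k x.+1)) => hb.
  by rewrite (bm _ _ hb) subrr mulr0.
rewrite mulr0 mulr0 expR0.
case: (b k x); last by rewrite mulr0 mulr0 expR0 subrr mulr0.
rewrite mulr1 /sg; case: ifPn => hr.
  have : 1 <= expR (r * w k) by rewrite -expR0 ler_expR mulr_ge0.
  lra.
have : expR (r * w k) <= 1.
  by rewrite -expR0 ler_expR nmulr_rle0 //; rewrite ltNge.
lra.
Qed.

Let hN_prod N s : hN N s = (\prod_(k <- SN N) f k (Xcount s k))%:E.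
Proof. by rewrite /hN mulr_sumr expR_sum. Qed.

Let EhN N : (En p (hN N) <= u N)%E.
Proof.
have -> : hN N = (fun s => (\prod_(k <- SN N) f k (Xcount s k))%:E).
  by apply: boolp.funext => s; exact: hN_prod.
apply: le_trans (@core R p p0 p1 sg sgsg n f (SN N) (SN_uniq N) f0 fm) _.
by rewrite /u -prod_SN.
Qed.

Let a0 k : 0 <= a k.
Proof. exact: mm_ge0. Qed.

Let a_ge1 k : 0 <= r -> 1 <= a k.
Proof.
move=> r0; rewrite -subr_ge0 -(mm_cst (p k) n 1) /a.
have -> : mm (p k) n (f k) - mm (p k) n (fun=> 1) =
   1 * mm (p k) n (f k) + (-1) * mm (p k) n (fun=> 1) by ring.
rewrite -mm_lin; apply: mm_ge0 => // x.
have : 1 <= f k x by rewrite /f -expR0 ler_expR mulr_ge0.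
lra.
Qed.

Let a_le1 k : r <= 0 -> a k <= 1.
Proof.
move=> r0; have e := mm_lin (p k) n 1 (-1) (fun=> 1) (f k).
have : 0 <= mm (p k) n (fun x => 1 * 1 + (-1) * f k x).
  apply: mm_ge0 => // x.
  have : f k x <= 1 by rewrite /f -expR0 ler_expR; exact: mulr_le0_ge0.
  lra.
rewrite e mm_cst /a; lra.
Qed.

Let u_step N : u N.+1 = (u N * (if N \in M then a N else 1)%:E)%E.
Proof.
rewrite /u -EFinM; congr EFin.
by rewrite big_mkcond big_ord_recr /= -big_mkcond.
Qed.

Let u_cvg : cvgn u.
Proof.
have P0 N : 0 <= \prod_(k < N | (k : nat) \in M) a k by apply: prodr_ge0.
have [r0|r0] := leP 0 r.
  apply: ereal_nondecreasing_is_cvgn; apply/nondecreasing_seqP => N.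
  rewrite u_step /u -EFinM lee_fin; apply: ler_peMr => //.
  by case: ifP => _ //; exact: a_ge1.
apply: ereal_nonincreasing_is_cvgn; apply/nonincreasing_seqP => N.
rewrite u_step /u -EFinM lee_fin; apply: ler_piMr => //.
by case: ifP => _ //; apply: a_le1; exact: ltW.
Qed.

Let sum_le_esum N (s : {ffun 'I_n -> nat}) :
  ((\sum_(k <- SN N) c k (Xcount s k))%:E <= \esum_(k in M) (c k (Xcount s k))%:E)%E.
Proof.
apply: esum_ge; exists [set` SN N].
  split; first exact: finite_seq.
  by move=> k /=; rewrite mem_filter => /andP[/set_mem].
by rewrite -sumEFin fsbig_seq.
Qed.

Lemma final_gen : (En p h <= limn u)%E.
Proof.
have [r0|r0] := leP r 0.
  apply: lime_ge; first exact: u_cvg.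
  apply: nearW => N; apply: le_trans (EhN N).
  apply: le_esum => s _; apply: lee_wpmul2l; first by rewrite lee_fin sample_prob_ge0.
  rewrite /h /hN -[X in (_ <= X)%E]/(expeR (r * \sum_(k <- SN N) c k (Xcount s k))%:E).
  rewrite lee_expeR EFinM -[r]opprK EFinN !mulNe leeN2 lee_wpmul2l //.
    by rewrite lee_fin oppr_ge0.
rewrite /En; apply: ge_ereal_sup => _ [X [finX _] <-].
rewrite fsbig_finite //=.

have cv : (\sum_(s <- finmap.enum_fset (fset_set X)) ((sample_prob p s)%:E * hN N s))%E @[N --> \oo] -->
    (\sum_(s <- finmap.enum_fset (fset_set X)) ((sample_prob p s)%:E * h s))%E.
  apply: cvg_nnesum => [s _|s _].
    by apply: nearW => N; rewrite mule_ge0 // lee_fin ?sample_prob_ge0 ?expR_ge0.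
  apply: cvgeZl => //.
  apply: cvg_expR_E.
    have h0 : (0 <= r%:E * \esum_(k in M) (c k (Xcount s k))%:E)%E.
      by apply: mule_ge0; [rewrite lee_fin ltW | apply: esum_ge0 => k _; rewrite lee_fin].
    by apply/negP => /eqP e; move: h0; rewrite e.
  have -> : (fun N => (r * \sum_(k <- SN N) c k (Xcount s k))%:E) =
     (fun N => r%:E * \sum_(0 <= k < N | k \in M) (c k (Xcount s k))%:E)%E.
    by apply: boolp.funext => N; rewrite sum_SN EFinM.
  apply: cvgeZl => //.
  have E : (\esum_(k in M) (c k (Xcount s k))%:E = \sum_(k <oo | k \in M) (c k (Xcount s k))%:E)%E.
    by rewrite nneseries_esum ?set_mem_set // => k _; rewrite lee_fin.
  rewrite E.
  by apply: is_cvg_nneseries_cond => k _ _; rewrite lee_fin.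
rewrite -(cvg_lim _ cv) //.
apply: lee_lim; [by apply/cvg_ex; eexists; exact: cv | exact: u_cvg |].
apply: nearW => N; apply: le_trans (EhN N).
apply: esum_ge; exists X => //; rewrite fsbig_finite //.
Qed.

End FINAL.
Section IND.
Context {R : realType}.

Lemma mm_ind0 (q : R) n : mm q n (fun x => ((x == 0)%N)%:R) = (1 - q) ^+ n.
Proof.
elim: n => [|n IH] /=; first by rewrite ?expr0.
rewrite IH (@mm_ext _ q n (fun x => ((x.+1 == 0)%N)%:R) (fun _ => 0)) // mm_cst exprS; ring.
Qed.

Lemma sum_ind (x J : nat) : \sum_(l < J) (((x == l)%N)%:R : R) = ((x < J)%N)%:R.
Proof.
elim: J => [|J IH]; first by rewrite big_ord0 ltn0.
rewrite big_ord_recr /= IH.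
case: (ltngtP x J) => [h|h|->].
- by rewrite (ltn_trans h (ltnSn _)) addr0.
- by rewrite ltnS (leqNgt x J) h add0r.
- by rewrite ltnSn add0r.
Qed.

Lemma mm_indle (q : R) n j : mm q n (fun x => ((x <= j)%N)%:R) =
  \sum_(l < j.+1) 'C(n, l)%:R * q ^+ l * (1 - q) ^+ (n - l).
Proof.
elim: n j => [|n IH] j.
  rewrite /= big_ord_recl /= big1 ?addr0 ?expr0 ?bin0 //.
    by rewrite mulr1 mul1r.
  by move=> i _; rewrite bin0n mul0r mul0r.
rewrite /=; case: j => [|j].
  rewrite (@mm_ext _ q n (fun x => ((x.+1 <= 0)%N)%:R) (fun _ => 0)) // mm_cst IH.
  rewrite !big_ord1 /= !bin0 !expr0 subn0 exprS; ring.
rewrite (@mm_ext _ q n (fun x => ((x.+1 <= j.+1)%N)%:R) (fun x => ((x <= j)%N)%:R)) //.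
rewrite !IH.
rewrite [in RHS]big_ord_recl [X in _ = _ + X](_ : _ =
   q * \sum_(i < j.+1) 'C(n, i)%:R * q ^+ i * (1 - q) ^+ (n - i) +
   (1 - q) * \sum_(i < j.+1) 'C(n, i.+1)%:R * q ^+ i.+1 * (1 - q) ^+ (n - i.+1)).
  rewrite [\sum_(l < j.+2) _]big_ord_recl /= bin0 subn0 expr0 !mul1r exprS.
  have eb : \sum_(i < j.+1) 'C(n, bump 0 i)%:R * q ^+ bump 0 i * (1 - q) ^+ (n - bump 0 i) =
     \sum_(i < j.+1) 'C(n, i.+1)%:R * q ^+ i.+1 * (1 - q) ^+ (n - i.+1).
    by apply: eq_bigr => i _; rewrite /bump /= add1n.
  rewrite eb; ring.
rewrite !mulr_sumr -big_split /=; apply: eq_bigr => i _.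
rewrite /bump /= add1n binS natrD subSS exprS.
case: (ltnP i n) => hin.
  have -> : (n - i = (n - i.+1).+1)%N by rewrite subnSK.
  rewrite exprS; ring.
rewrite bin_small ?ltnS // mul0r mul0r mulr0 addr0; ring.
Qed.

End IND.
Theorem lemma3p5 (R : realType) (p : nat -> R) (M : set nat) (n : nat) :
  (forall k, 0 <= p k) ->
  (\esum_(k in [set: nat]) (p k)%:E)%E = 1%E ->
  (1 <= n)%N ->
  forall r : R,
    (En p (fun s : {ffun 'I_n -> nat} =>
       expeR (r%:E * \esum_(k in M) (p k * @delta R n s k 0)%:E))
     <= prod_over M (fun k => (expR (r * p k) - 1) * (1 - p k) ^+ n + 1)%R)%E
    /\
    (forall j : nat, (1 <= j)%N ->
      (En p (fun s : {ffun 'I_n -> nat} =>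
         expeR (r%:E * \esum_(k in M) (\sum_(l < j.+1) @delta R n s k l)%:E))
       <= prod_over M (fun k => (expR r - 1) *
            (\sum_(l < j.+1) 'C(n, l)%:R * p k ^+ l * (1 - p k) ^+ (n - l)) + 1)%R)%E).
Proof.
move=> p0 p1 _ r; split.
  have bm1 : forall k x : nat, (x.+1 == 0)%N -> (x == 0)%N by [].
  have H := @final_gen R p p0 p1 M n r p (fun _ x => (x == 0)%N) p0 bm1.
  apply: le_trans H _.
  rewrite le_eqVlt; apply/orP; left; apply/eqP; rewrite /prod_over; apply: congr_lim.
  apply: boolp.funext => N; congr EFin; apply: eq_bigr => k _ /=.
  rewrite (@mm_ext _ (p k) n _ (fun x => 1 + (expR (r * p k) - 1) * ((x == 0)%N)%:R)); last first.
    by move=> x; case: (x == 0)%N; rewrite ?mulr1 ?mulr0 ?expR0; ring.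
  by rewrite mm_affine mm_ind0; ring.
move=> j _.
have bm2 : forall k x : nat, (x.+1 <= j)%N -> (x <= j)%N by move=> k x; exact: ltnW.
have H := @final_gen R p p0 p1 M n r (fun _ => 1) (fun _ x => (x <= j)%N) (fun _ => ler01) bm2.
have -> : (fun s : {ffun 'I_n -> nat} =>
    expeR (r%:E * \esum_(k in M) (\sum_(l < j.+1) @delta R n s k l)%:E))%E =
   (fun s : {ffun 'I_n -> nat} => expeR (r%:E * \esum_(k in M)
      ((fun _ => 1) k * ((fun _ x => (x <= j)%N) k (Xcount s k))%:R)%:E))%E.
  apply: boolp.funext => s; congr (expeR (_ * _))%E; apply: eq_esum => k _.
  by rewrite /delta sum_ind mul1r ltnS.
apply: le_trans H _.
rewrite le_eqVlt; apply/orP; left; apply/eqP; rewrite /prod_over; apply: congr_lim.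
apply: boolp.funext => N; congr EFin; apply: eq_bigr => k _ /=.
rewrite (@mm_ext _ (p k) n _ (fun x => 1 + (expR r - 1) * ((x <= j)%N)%:R)); last first.
  by move=> x; case: (x <= j)%N; rewrite ?mulr1 ?mulr0 ?expR0; ring.
by rewrite mm_affine mm_indle; ring.
Qed.
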